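(* Let $p$ be an odd prime and $a,c$ positive integers such that $c$ is a primitive divisor of $p^a-1$. If $\tfrac{p^a-1}{c}$ is odd, then $$g\Big(\tfrac{p^{2a}-1}{2c},\,p^{2a}\Big)=2\,g\Big(\tfrac{p^a-1}{c},\,p^a\Big).$$
   Context: For a prime power $q$ and a positive integer $k$, the Waring number $g(k,q)$ is the smallest $s$ (if it exists) such that every element of $\mathbb{F}_q$ is a sum of $s$ $k$-th powers of elements of $\mathbb{F}_q$. An integer $e$ is a primitive divisor of $p^a-1$ if $e\mid p^a-1$ and $e\nmid p^t-1$ for every $1\le t<a$. *)

(* Defs.v *)
From HB Require Import structures.
From mathcomp Require Import all_boot all_order all_algebra all_field.
Set Implicit Arguments. Unset Strict Implicit. Unset Printing Implicit Defensive.
Import GRing.Theory.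
Local Open Scope ring_scope.

Definition sum_of_kth_powers (F : finFieldType) (k s : nat) (x : F) : Prop :=
  exists f : 'I_s -> F, x = \sum_(i < s) f i ^+ k.

Definition waring_ok (F : finFieldType) (k s : nat) : Prop :=
  forall x : F, sum_of_kth_powers k s x.

Definition is_waring_number (F : finFieldType) (k s : nat) : Prop :=
  waring_ok F k s /\ (forall s', waring_ok F k s' -> (s <= s')%N).

Definition primitive_divisor (e p a : nat) : Prop :=
  (e %| p ^ a - 1)%N /\ (forall t, (0 < t)%N -> (t < a)%N -> ~~ (e %| p ^ t - 1)%N).

(* Main.v *)
From HB Require Import structures.
From mathcomp Require Import all_boot all_order all_algebra all_field.
From mathcomp Require Import all_fingroup cyclic zify ring.
Require Import Defs.
From Stdlib Require Import ClassicalEpsilon Classical.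
Set Implicit Arguments. Unset Strict Implicit. Unset Printing Implicit Defensive.
Import GRing.Theory.
Local Open Scope ring_scope.


Definition iotaF (F : nzRingType) (p : nat) (H : p \in [pchar F]) (x : 'F_p) : F := (x : nat)%:R.

Lemma natr_modn (F : nzRingType) n m : (n%:R = 0 :> F) -> ((m %% n)%:R : F) = m%:R.
Proof. by move=> h; rewrite {2}(divn_eq m n) natrD natrM h mulr0 add0r. Qed.

Lemma Fp_char0 (F : nzRingType) (p : nat) (H : p \in [pchar F]) :
  (((Zp_trunc (pdiv p)).+2)%:R : F) = 0.
Proof. by rewrite (Fp_cast (pcharf_prime H)) pcharf0. Qed.

Lemma iotaF_zmod (F : nzRingType) (p : nat) (H : p \in [pchar F]) :
  zmod_morphism (iotaF H).
Proof.
have h0 := Fp_char0 H.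
move=> x y; rewrite /iotaF /= !(natr_modn _ h0) natrD.
rewrite (@natr_modn F _ (_ - y) h0) natrB ?(ltnW (ltn_ord y)) //.
by rewrite h0 add0r.
Qed.

Lemma iotaF_monoid (F : nzRingType) (p : nat) (H : p \in [pchar F]) :
  monoid_morphism (iotaF H).
Proof.
have h0 := Fp_char0 H.
split; first by rewrite /iotaF /= (natr_modn _ h0).
by move=> x y; rewrite /iotaF /= (natr_modn _ h0) natrM.
Qed.

HB.instance Definition _ (F : nzRingType) (p : nat) (H : p \in [pchar F]) :=
  GRing.isZmodMorphism.Build _ _ (iotaF H) (iotaF_zmod H).
HB.instance Definition _ (F : nzRingType) (p : nat) (H : p \in [pchar F]) :=
  GRing.isMonoidMorphism.Build _ _ (iotaF H) (iotaF_monoid H).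


Definition pb (P : Prop) : bool := if excluded_middle_informative P then true else false.
Lemma pbP (P : Prop) : reflect P (pb P).
Proof. by rewrite /pb; case: excluded_middle_informative => h; constructor. Qed.

Lemma addgroup_test (F : finFieldType) (R : {set F}) :
  (0 \in R) -> (forall x y, x \in R -> y \in R -> x + y \in R) -> group_set R.
Proof.
move=> h0 hD; apply/group_setP; split => //.
Qed.


Section Sums.
Variable F : finFieldType.

Lemma sumk0 k : (0 < k)%N -> forall s, sum_of_kth_powers k s (0 : F).
Proof.
move=> k0 s; exists (fun _ => 0); rewrite big1 // => i _; by rewrite expr0n; case: k k0.
Qed.

Lemma sumk_add k s t (x y : F) : sum_of_kth_powers k s x -> sum_of_kth_powers k t y ->
  sum_of_kth_powers k (s + t) (x + y).
Proof.
move=> [f ->] [g ->].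
exists (fun i => match split i with inl j => f j | inr j => g j end).
rewrite big_split_ord /=; congr (_ + _); apply: eq_bigr => j _.
  by rewrite -/(unsplit (inl j)) unsplitK.
by rewrite -/(unsplit (inr j)) unsplitK.
Qed.

Lemma sumk1 k (y : F) : sum_of_kth_powers k 1 (y ^+ k).
Proof. by exists (fun _ => y); rewrite big_ord1. Qed.

Lemma sumk_mono k s s' (x : F) : (0 < k)%N -> sum_of_kth_powers k s x -> (s <= s')%N ->
  sum_of_kth_powers k s' x.
Proof.
move=> k0 hx ss; rewrite -(subnKC ss) -[x]addr0; apply: sumk_add => //; exact: sumk0.
Qed.

Lemma sumk_recr k s (x : F) : sum_of_kth_powers k s.+1 x ->
  exists y z, sum_of_kth_powers k s y /\ x = y + z ^+ k.
Proof.
move=> [f ->]; rewrite big_ord_recr /=.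
exists (\sum_(i < s) f (widen_ord (leqnSn s) i) ^+ k), (f ord_max); split => //.
by exists (fun i => f (widen_ord (leqnSn s) i)).
Qed.

Lemma sumk_0 k (x : F) : sum_of_kth_powers k 0 x -> x = 0.
Proof. by move=> [f ->]; rewrite big_ord0. Qed.

End Sums.

Lemma unit_pow (F : finFieldType) (x : F) : x != 0 -> x ^+ #|F|.-1 = 1.
Proof.
move=> x0; apply: (mulfI x0); rewrite mulr1 -exprS prednK ?expf_card //.
by apply/card_gt0P; exists 0.
Qed.

Lemma exists_prim (F : finFieldType) : exists z : F, #|F|.-1.-primitive_root z.
Proof.
have : has (#|F|.-1).-primitive_root (enum (predC1 (0:F))); last first.
  by case/hasP => z _ hz; exists z.
apply: has_prim_root.
- by rewrite -ltnS prednK ?finNzRing_gt1 // (ltn_trans _ (finNzRing_gt1 F)).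
- by apply/allP => x; rewrite mem_enum /= => x0; rewrite unity_rootE unit_pow.
- exact: enum_uniq.
- by rewrite -cardE cardC1.
Qed.

Lemma gen_all (F : finFieldType) p a c : prime p -> #|F| = (p ^ a)%N ->
  primitive_divisor c p a -> (0 < c)%N ->
  forall x : F, exists s, sum_of_kth_powers ((p ^ a - 1) %/ c) s x.
Proof.
move=> pr cF [cdv cprim] c0.
set k := ((p ^ a - 1) %/ c)%N.
have q1 : (1 < p ^ a)%N by rewrite -cF finNzRing_gt1.
have kc : (k * c = p ^ a - 1)%N by rewrite divnK.
have k0 : (0 < k)%N.
  by rewrite lt0n; apply/eqP => k0; move: kc; rewrite k0 mul0n => /esym/eqP; rewrite subn_eq0 leqNgt q1.
have [th thP] := exists_prim F.
have wP : c.-primitive_root (th ^+ k).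
  have e : (#|F|.-1 = p ^ a - 1)%N by rewrite cF subn1.
  by rewrite /k -e; apply: (dvdn_prim_root thP); rewrite e.
set w := th ^+ k.
pose R : {set F} := [set x | pb (exists s, sum_of_kth_powers k s x)].
have RP x : reflect (exists s, sum_of_kth_powers k s x) (x \in R).
  by rewrite inE; apply: pbP.
have R0 : (0 : F) \in R by apply/RP; exists 0%N; apply: sumk0.
have R1 : (1 : F) \in R by apply/RP; exists 1%N; rewrite -(expr1n F k); apply: sumk1.
have RD x y : x \in R -> y \in R -> x + y \in R.
  by move=> /RP[s hs] /RP[t ht]; apply/RP; exists (s + t)%N; apply: sumk_add.
have RM x : x \in R -> w * x \in R.
  move=> /RP[s [f ->]]; apply/RP; exists s; exists (fun i => th * f i).
  by rewrite mulr_sumr; apply: eq_bigr => i _; rewrite exprMn.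
have Rgs : group_set R by apply: addgroup_test.
have /(dvdn_pfactor _ _ pr)[t ta cR] : (#|R| %| p ^ a)%N.
  by rewrite -cF -cardsT (cardSg (G := [set: F]%G) (H := Group Rgs)) ?subsetT.
pose R' := R :\ 0.
have w0 : w != 0 by rewrite (prim_root_eq0 wP) -lt0n.
have R'M y : y \in R' -> w * y \in R'.
  by rewrite !in_setD1 => /andP[y0 yR]; rewrite mulf_neq0 // RM.
have winj : {in R' &, injective (fun y => w * y)}.
  by move=> y z _ _; apply: mulfI.
have imR : [set w * y | y in R'] = R'.
  apply/eqP; rewrite eqEcard card_in_imset // leqnn andbT.
  by apply/subsetP => z /imsetP[y yR ->]; apply: R'M.
have prodne : \prod_(y in R') y != 0.
  by rewrite prodf_seq_neq0; apply/allP => y _; apply/implyP; rewrite in_setD1 => /andP[].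
have wR : w ^+ #|R'| = 1.
  apply: (mulIf prodne); rewrite mul1r -prodr_const -big_split /=.
  by rewrite -(big_imset (fun y => y) winj) /= imR.
have cR' : (c %| #|R'|)%N by rewrite (prim_order_dvd wP) wR.
have cRR : #|R| = #|R'|.+1 by rewrite (cardsD1 0 R) R0.
have t0 : (0 < t)%N.
  rewrite lt0n; apply/eqP => t0; move: cR; rewrite t0 expn0 cRR => -[] /eqP.
  by rewrite cards_eq0 => /eqP R'0; move: (R1); rewrite -(setD1K R0) -/R' R'0 !inE oner_eq0.
have ta' : t = a.
  apply/eqP; rewrite eqn_leq ta /= leqNgt; apply/negP => lt.
  by move: (cprim t t0 lt); rewrite -cR cRR subn1 /= cR'.
move=> x.
have : x \in R.
  have -> : R = [set: F] by apply/eqP; rewrite eqEcard subsetT cardsT cR ta' cF leqnn.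
  by rewrite inE.
by move/RP.
Qed.


Section Embed.
Variables (F1 F2 : finFieldType) (p : nat) (H1 : p \in [pchar F1]) (H2 : p \in [pchar F2]).
Hypothesis Hx : forall x : F1, x ^+ #|F2| = x.

Definition theta : F1 := xchoose (exists_prim F1).
Lemma thetaP : #|F1|.-1.-primitive_root theta.
Proof. exact: (xchooseP (exists_prim F1)). Qed.

Definition ev1 (P : {poly 'F_p}) : F1 := (map_poly (iotaF H1) P).[theta].

Lemma ev1B P Q : ev1 (P - Q) = ev1 P - ev1 Q.
Proof. by rewrite /ev1 rmorphB hornerD hornerN. Qed.
Lemma ev1M P Q : ev1 (P * Q) = ev1 P * ev1 Q.
Proof. by rewrite /ev1 rmorphM hornerM. Qed.
Lemma ev11 : ev1 1 = 1.
Proof. by rewrite /ev1 rmorph1 hornerC. Qed.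

Lemma ev1_surj x : exists P, ev1 P == x.
Proof.
have [->|x0] := eqVneq x 0; first by exists 0; rewrite /ev1 rmorph0 horner0.
have [i ->] := prim_rootP thetaP (unit_pow x0).
by exists 'X^i; rewrite /ev1 map_polyXn hornerXn.
Qed.

Lemma ker_ex : exists n, pb (exists P : {poly 'F_p}, P != 0 /\ size P = n /\ ev1 P = 0).
Proof.
exists (size ('X^#|F2| - 'X : {poly 'F_p})); apply/pbP.
exists ('X^#|F2| - 'X); split; last split => //.
  rewrite subr_eq0; apply/eqP => /(congr1 (size : {poly 'F_p} -> nat)).
  rewrite size_polyXn size_polyX; by case=> e; move: (finNzRing_gt1 F2); rewrite e ltnn.
by rewrite ev1B /ev1 map_polyXn map_polyX hornerXn hornerX Hx subrr.
Qed.

Definition nm := ex_minn ker_ex.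

Lemma m_ex : exists P : {poly 'F_p}, (P != 0) && (size P == nm) && (ev1 P == 0).
Proof.
rewrite /nm; case: ex_minnP => n /pbP [P [P0 [sP eP]]] _.
by exists P; rewrite P0 sP eP !eqxx.
Qed.

Definition mp := xchoose m_ex.

Lemma mpP : [/\ mp != 0, size mp = nm & ev1 mp = 0].
Proof. by have /andP[/andP[? /eqP ?] /eqP ?] := xchooseP m_ex. Qed.

Lemma mp_min P : P != 0 -> ev1 P = 0 -> (size mp <= size P)%N.
Proof.
move=> P0 eP; have [_ -> _] := mpP; rewrite /nm; case: ex_minnP => n _; apply.
by apply/pbP; exists P.
Qed.

Lemma mp_dvd P : ev1 P = 0 -> mp %| P.
Proof.
move=> eP; have [m0 _ em] := mpP.
have e: ev1 (P %% mp) = 0.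
  have -> : P %% mp = P - P %/ mp * mp by rewrite {2}(divp_eq P mp) addrC addKr.
  by rewrite ev1B ev1M em mulr0 subr0.
have [r0|r0] := eqVneq (P %% mp) 0; first by apply/modp_eq0P.
have := mp_min r0 e; rewrite leqNgt ltn_modp m0 //.
Qed.

Lemma mp_size : (1 < size mp)%N.
Proof.
have [m0 _ em] := mpP.
rewrite ltnNge; apply/negP => sm.
have /size1_polyC em' : (size mp <= 1)%N by [].
move: em; rewrite em' /ev1 map_polyC hornerC /= => /eqP; rewrite fmorph_eq0 => /eqP c0.
by move: m0; rewrite em' c0 eqxx.
Qed.

Lemma eta_ex : exists y : F2, root (map_poly (iotaF H2) mp) y.
Proof.
have d : mp %| 'X^#|F2| - 'X.
  by apply: mp_dvd; rewrite ev1B /ev1 map_polyXn map_polyX hornerXn hornerX Hx subrr.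
have : map_poly (iotaF H2) mp %| \prod_(x <- index_enum F2) ('X - (id x)%:P).
  by rewrite -finField_genPoly -(map_polyXn (iotaF H2)) -(map_polyX (iotaF H2)) -rmorphB dvdp_map.
case/dvdp_prod_XsubC => m' e.
move: e; case: (mask m' (index_enum F2)) => [|y s] e.
  move: e; rewrite big_nil -size_poly_eq1 size_map_poly => /eqP e.
  by move: mp_size; rewrite e ltnn.
by exists y; rewrite (eqp_root e) big_cons rootM root_XsubC eqxx.
Qed.

Definition eta : F2 := xchoose eta_ex.
Definition ev2 (P : {poly 'F_p}) : F2 := (map_poly (iotaF H2) P).[eta].

Lemma ev2B P Q : ev2 (P - Q) = ev2 P - ev2 Q.
Proof. by rewrite /ev2 rmorphB hornerD hornerN. Qed.
Lemma ev2M P Q : ev2 (P * Q) = ev2 P * ev2 Q.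
Proof. by rewrite /ev2 rmorphM hornerM. Qed.
Lemma ev21 : ev2 1 = 1.
Proof. by rewrite /ev2 rmorph1 hornerC. Qed.

Lemma ev12 P : ev1 P = 0 -> ev2 P = 0.
Proof.
move/mp_dvd/dvdpP => [Q ->]; rewrite ev2M.
have /rootP e := xchooseP eta_ex.
by rewrite [ev2 mp]/ev2 /eta e mulr0.
Qed.

Lemma ev_wd P Q : ev1 P = ev1 Q -> ev2 P = ev2 Q.
Proof. by move=> e; apply/eqP; rewrite -subr_eq0 -ev2B ev12 // ev1B e subrr. Qed.

Definition phiE (x : F1) : F2 := ev2 (xchoose (ev1_surj x)).

Lemma phiE_spec x : ev1 (xchoose (ev1_surj x)) = x.
Proof. exact/eqP/(xchooseP (ev1_surj x)). Qed.

Lemma phiE_zmod : zmod_morphism phiE.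
Proof.
move=> x y; rewrite /phiE -ev2B; apply: ev_wd; by rewrite ev1B !phiE_spec.
Qed.

Lemma phiE_monoid : monoid_morphism phiE.
Proof.
split; first by rewrite /phiE -ev21; apply: ev_wd; rewrite ev11 phiE_spec.
move=> x y; rewrite /phiE -ev2M; apply: ev_wd; by rewrite ev1M !phiE_spec.
Qed.
End Embed.

HB.instance Definition _ (F1 F2 : finFieldType) (p : nat) (H1 : p \in [pchar F1])
  (H2 : p \in [pchar F2]) (Hx : forall x : F1, x ^+ #|F2| = x) :=
  GRing.isZmodMorphism.Build _ _ (phiE H1 H2 Hx) (phiE_zmod H1 H2 Hx).
HB.instance Definition _ (F1 F2 : finFieldType) (p : nat) (H1 : p \in [pchar F1])
  (H2 : p \in [pchar F2]) (Hx : forall x : F1, x ^+ #|F2| = x) :=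
  GRing.isMonoidMorphism.Build _ _ (phiE H1 H2 Hx) (phiE_monoid H1 H2 Hx).

Lemma embed_exists (F1 F2 : finFieldType) (p : nat) : p \in [pchar F1] ->
  p \in [pchar F2] -> (forall x : F1, x ^+ #|F2| = x) ->
  exists f : {rmorphism F1 -> F2}, True.
Proof. by move=> H1 H2 Hx; exists (phiE H1 H2 Hx). Qed.

Lemma waring_exists (F : finFieldType) p a c : prime p -> #|F| = (p ^ a)%N ->
  primitive_divisor c p a -> (0 < c)%N -> (0 < (p ^ a - 1) %/ c)%N ->
  exists g, is_waring_number F ((p ^ a - 1) %/ c) g.
Proof.
move=> pr cF pd c0 k0; set k := ((p ^ a - 1) %/ c)%N.
have gen (x : F) : exists s, pb (sum_of_kth_powers k s x).
  by have [s hs] := gen_all pr cF pd c0 x; exists s; apply/pbP.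
pose sx x := ex_minn (gen x).
have ex : exists s, pb (waring_ok F k s).
  exists (\big[maxn/0%N]_(x : F) sx x); apply/pbP => x.
  apply: (@sumk_mono F k (sx x)) => //; last exact: (@leq_bigmax F sx x).
  by rewrite /sx; case: ex_minnP => n /pbP.
exists (ex_minn ex); case: ex_minnP => g /pbP hg hmin; split => // s' hs'.
by apply: hmin; apply/pbP.
Qed.

Lemma main_aux (p a c : nat) (F1 F2 : finFieldType) :
  prime p -> odd p -> (0 < a)%N -> (0 < c)%N ->
  primitive_divisor c p a ->
  odd ((p ^ a - 1) %/ c) ->
  #|F1| = (p ^ a)%N -> #|F2| = (p ^ (2 * a))%N ->
  exists g : nat,
    is_waring_number F1 ((p ^ a - 1) %/ c) g /\
    is_waring_number F2 ((p ^ (2 * a) - 1) %/ (2 * c)) (2 * g).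
Proof.
move=> pr podd a0 c0 pd kodd c1 c2.
have [cdv _] := pd.
have q1 : (1 < p ^ a)%N by rewrite -c1 finNzRing_gt1.
have qodd : odd (p ^ a) by rewrite oddX podd orbT.
have e2 : (p ^ (2 * a) = p ^ a * p ^ a)%N by rewrite mulnC expnM.
set q := (p ^ a)%N in q1 qodd e2 c1 cdv kodd *.
set k := ((q - 1) %/ c)%N in kodd *.
set K := ((p ^ (2 * a) - 1) %/ (2 * c))%N.
have kc : (k * c = q - 1)%N by rewrite divnK.
have k0 : (0 < k)%N by move: kodd; rewrite lt0n; apply: contraTneq => ->.
set h := (q.+1)./2.
have qh : (q.+1 = h * 2)%N.
  by rewrite /h muln2 -{1}(odd_double_half q.+1) /= qodd.
have KE : (K = k * h)%N.
  rewrite /K e2.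
  have -> : (q * q - 1 = 2 * c * (k * h))%N.
    have : (q * q - 1 = (q - 1) * q.+1)%N by rewrite -[q.+1]addn1 -(subn_sqr q 1).
    by rewrite -kc qh => ->; lia.
  by rewrite mulKn // muln_gt0.
have h0 : (0 < h)%N by lia.
have K0 : (0 < K)%N by rewrite KE muln_gt0 k0 h0.
have K2 : (2 * K = k * q.+1)%N by rewrite KE qh; lia.
have N2E : (#|F2|.-1 = (q - 1) * q.+1)%N by rewrite c2 e2 -subn1 -[q.+1]addn1 -(subn_sqr q 1).
have N1E : (#|F1|.-1 = q - 1)%N by rewrite c1 subn1.
have [g gw] := waring_exists pr c1 pd c0 k0.
exists g; split => //.
have [gok gmin] := gw.
have H1 : p \in [pchar F1] := card_finPcharP c1 pr.
have H2 : p \in [pchar F2] := card_finPcharP c2 pr.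
have Hx : forall x : F1, x ^+ #|F2| = x by move=> x; rewrite c2 e2 exprM -c1 !expf_card.
have [phi _] := embed_exists H1 H2 Hx.
have [ga gaP] := exists_prim F2; rewrite N2E in gaP.
set zeta := ga ^+ K.
have q10 : (0 < q - 1)%N by rewrite subn_gt0.
have Kn0 : (K == 0)%N = false by rewrite (negPf (lt0n_neq0 K0)).
have kn0 : (k == 0)%N = false by rewrite (negPf (lt0n_neq0 k0)).
have Fa (x : F1) : exists y : F2, y ^+ K == phi (x ^+ k).
  have [->|x0] := eqVneq x 0.
    by exists 0; rewrite !expr0n Kn0 kn0 rmorph_nat.
  have px0 : phi x != 0 by rewrite fmorph_eq0.
  have := unit_pow px0; rewrite N2E => /(prim_rootP gaP)[[j _] /= ej].
  have : ga ^+ (j * (q - 1)) = 1.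
    by rewrite exprM -ej -rmorphXn -N1E unit_pow // rmorph1.
  move/eqP; rewrite -(prim_order_dvd gaP) mulnC dvdn_pmul2r // => /dvdnP[i ji].
  exists (ga ^+ i.*2); apply/eqP.
  rewrite rmorphXn ej -!exprM; congr (_ ^+ _); rewrite ji -muln2 -mulnA K2; ring.
have Fb (x : F1) : exists y : F2, y ^+ K == zeta * phi (x ^+ k).
  have [y /eqP ey] := Fa x; exists (ga * y); by rewrite exprMn ey.
have [th thP] := exists_prim F1; rewrite N1E in thP.
have phP : (q - 1).-primitive_root (phi th) by rewrite fmorph_primitive_root.
have : (ga ^+ q.+1) ^+ (q - 1) = 1 by rewrite -exprM mulnC (prim_expr_order gaP).
case/(prim_rootP phP) => -[i0 _] /= ei0.
have ev i : ga ^+ (i.*2 * K) = phi ((th ^+ (i0 * i)) ^+ k).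
  rewrite !rmorphXn -!exprM -mulnA [in RHS]exprM -ei0 -exprM; congr (_ ^+ _).
  rewrite -muln2 -mulnA K2; ring.
have Fc (y : F2) : (exists x, y ^+ K = phi (x ^+ k)) \/ (exists x, y ^+ K = zeta * phi (x ^+ k)).
  have [->|y0] := eqVneq y 0.
    by left; exists 0; rewrite !expr0n Kn0 kn0 rmorph_nat.
  have := unit_pow y0; rewrite N2E => /(prim_rootP gaP)[[j _] /= ->].
  rewrite -exprM -(odd_double_half j); case: (odd j) => /=.
    by right; exists (th ^+ (i0 * j./2)); rewrite mulnDl mul1n exprD ev.
  by left; exists (th ^+ (i0 * j./2)); rewrite add0n ev.
have ga0 : ga != 0 by rewrite (prim_root_eq0 gaP) muln_eq0 negb_or -!lt0n q10.
have Fd (w : F1) : zeta != phi w.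
  apply/negP => /eqP ez.
  have z0 : zeta != 0 by rewrite expf_neq0.
  have : zeta ^+ (q - 1) = 1.
    apply: (mulfI z0); rewrite mulr1 -exprS subn1 prednK ?(ltnW q1) //.
    by rewrite ez -rmorphXn -c1 expf_card.
  rewrite -exprM; move/eqP; rewrite -(prim_order_dvd gaP).
  have -> : ((q - 1) * q.+1 = 2 * (K * c))%N by rewrite -kc mulnAC -K2 mulnA.
  have -> : (K * (q - 1) = k * (K * c))%N by rewrite -kc mulnCA.
  by rewrite dvdn_pmul2r ?muln_gt0 ?K0 // dvdn2 kodd.
have Fe u v u' v' : phi u + zeta * phi v = phi u' + zeta * phi v' -> u = u' /\ v = v'.
  move=> e; have [vv|nv] := eqVneq v v'.
    subst v'; split => //; apply: (fmorph_inj phi); exact: (addIr _ e).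
  exfalso; move/negP: (Fd ((u' - u) / (v - v'))); apply; apply/eqP.
  have nv' : phi v - phi v' != 0 by rewrite -rmorphB fmorph_eq0 subr_eq0.
  rewrite fmorph_div !rmorphB; apply: (mulIf nv'); rewrite divfK //.
  apply/eqP; rewrite -subr_eq0.
  have -> : zeta * (phi v - phi v') - (phi u' - phi u) =
    (phi u + zeta * phi v) - (phi u' + zeta * phi v') by ring.
  by rewrite e subrr.
have Ff (x : F2) : exists u v, x = phi u + zeta * phi v.
  pose f := fun uv : F1 * F1 => phi uv.1 + zeta * phi uv.2.
  have finj : injective f by move=> [u v] [u' v']; rewrite /f /= => /Fe [-> ->].
  have := inj_card_onto finj _ x; rewrite card_prod c1 c2 e2 leqnn => /(_ isT).
  by case/codomP => -[u v] ->; exists u, v.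
have M1 s u : sum_of_kth_powers k s u -> sum_of_kth_powers K s (phi u).
  move=> [f ->]; exists (fun i => xchoose (Fa (f i))); rewrite rmorph_sum.
  by apply: eq_bigr => i _; rewrite (eqP (xchooseP (Fa (f i)))) rmorphXn.
have M2 s u : sum_of_kth_powers k s u -> sum_of_kth_powers K s (zeta * phi u).
  move=> [f ->]; exists (fun i => xchoose (Fb (f i))); rewrite rmorph_sum mulr_sumr.
  by apply: eq_bigr => i _; rewrite (eqP (xchooseP (Fb (f i)))) rmorphXn.
have M3 s x : sum_of_kth_powers K s x -> exists s1 s2 u v, [/\ (s1 + s2 = s)%N,
    sum_of_kth_powers k s1 u, sum_of_kth_powers k s2 v & x = phi u + zeta * phi v].
  elim: s x => [|s IH] x.
    move/sumk_0 ->; exists 0%N, 0%N, 0, 0; split => //; try exact: sumk0.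
    by rewrite raddf0 mulr0 addr0.
  case/sumk_recr => y [z [hy ->]].
  have [s1 [s2 [u [v [es hu hv ->]]]]] := IH y hy.
  case: (Fc z) => -[w ->].
    exists s1.+1, s2, (u + w ^+ k), v; split.
    - by rewrite addSn es.
    - by rewrite -addn1; apply: sumk_add => //; apply: sumk1.
    - by [].
    by rewrite rmorphD; ring.
  exists s1, s2.+1, u, (v + w ^+ k); split.
  - by rewrite addnS es.
  - by [].
  - by rewrite -addn1; apply: sumk_add => //; apply: sumk1.
  by rewrite rmorphD; ring.
split.
  move=> x; have [u [v ->]] := Ff x.
  by rewrite mul2n -addnn; apply: sumk_add; [apply: M1 | apply: M2]; apply: gok.
move=> s' hs'; rewrite leqNgt; apply/negP => lt.
have g0 : (0 < g)%N.
  rewrite lt0n; apply/eqP => g0; move: (gok 1); rewrite g0 => /sumk_0 /eqP.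
  by rewrite oner_eq0.
have : ~ waring_ok F1 k g.-1.
  by move/gmin; rewrite leqNgt prednK ?leqnn.
move/not_all_ex_not => [u0 hu0].
have [s1 [s2 [u [v [es hu hv e]]]]] := M3 s' _ (hs' (phi u0 + zeta * phi u0)).
have [eu ev'] := Fe _ _ _ _ e.
have [h1|h1] := leqP s1 g.-1.
  by apply: hu0; rewrite eu; exact: (sumk_mono k0 hu h1).
apply: hu0; rewrite ev'; apply: (sumk_mono k0 hv); lia.
Qed.

Local Close Scope ring_scope.


Theorem mainTheorem8 (p a c : nat) (F1 F2 : finFieldType) :
  prime p -> odd p -> (0 < a)%N -> (0 < c)%N ->
  primitive_divisor c p a ->
  odd ((p ^ a - 1) %/ c) ->
  #|F1| = (p ^ a)%N -> #|F2| = (p ^ (2 * a))%N ->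
  exists g : nat,
    is_waring_number F1 ((p ^ a - 1) %/ c) g /\
    is_waring_number F2 ((p ^ (2 * a) - 1) %/ (2 * c)) (2 * g).
Proof. exact: main_aux. Qed.
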